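(* Let $f:\mathbb N\to\{0,1\}$ and let $\theta$ be a closed term with $\theta\Vdash\exists n^{\mathbb N}(f(n)=1)$. Then $\theta\star p\cdot\pi_0\succ p\star\underline n\cdot\varpi$ for some integer $n$ with $f(n)=1$ and some stack $\varpi$.
   Context: Fix an integer $N\ge 0$. The set $\Lambda$ of terms is the smallest set containing the constants $B,C,I,K,W,cc,A$ and $p,q_0,\dots,q_N$, closed under application $(\xi)\eta$ (written $\xi\eta$), and containing, for each sequence $(\xi_i)_{i\in\mathbb N}$ of closed terms (no occurrence of $p,q_0,\dots,q_N$), a constant $\bigwedge_i\xi_i$ (injectively, well-founded). Stacks: finite sequences $t_0\cdot\ldots\cdot t_{n-1}\cdot\pi_0$ of terms, $\pi_0$ the empty stack; $\Pi$ the set of stacks. $\ell_t=((C)(B)CB)t$, $k_{\pi_0}=A$, $k_{t\cdot\pi}=(\ell_t)k_\pi$; $\sigma=(BW)(C)(B)BB$, $\underline0=(K)I$, $\underline{n+1}=(\sigma)\underline n$. Execution $\succ$: least preorder on $\Lambda\times\Pi$ with $(\xi)\eta\star\pi\succ\xi\star\eta\cdot\pi$; $B\star\xi\cdot\eta\cdot\zeta\cdot\pi\succ\xi\star(\eta)\zeta\cdot\pi$; $C\star\xi\cdot\eta\cdot\zeta\cdot\pi\succ\xi\star\zeta\cdot\eta\cdot\pi$; $I\star\xi\cdot\pi\succ\xi\star\pi$; $K\star\xi\cdot\eta\cdot\pi\succ\xi\star\pi$; $W\star\xi\cdot\eta\cdot\pi\succ\xi\star\eta\cdot\eta\cdot\pi$;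 $cc\star\xi\cdot\pi\succ\xi\star k_\pi\cdot\pi$; $A\star\xi\cdot\pi\succ\xi\star\pi_0$; $\bigwedge_i\xi_i\star\underline n\cdot\pi\succ\xi_n\star\pi$. Pole $\perp\!\!\!\perp=\{\xi\star\pi:\exists\varpi,\ \xi\star\pi\succ p\star\varpi\}$. Realizability (Krivine): $\xi\Vdash F$ iff $\xi\star\pi\in\perp\!\!\!\perp$ for all $\pi\in\|F\|$, where $\|\bot\|=\Pi$, $\|\top\|=\emptyset$, $\|A\to B\|=\{\eta\cdot\pi:\eta\Vdash A,\pi\in\|B\|\}$, $\|\forall n^{\mathbb N}F[n]\|=\{\underline n\cdot\pi:n\in\mathbb N,\pi\in\|F[n]\|\}$; $\neg A$ is $A\to\bot$ and $\exists n^{\mathbb N}F[n]$ is $\neg\forall n^{\mathbb N}\neg F[n]$. For a function $f$ of the ground model, the formula $f(n)\neq1$ has falsity value $\|\bot\|=\Pi$ if $f(n)=1$ and $\|\top\|=\emptyset$ if $f(n)\neq1$. *)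

(* Defs.v *)
From Stdlib Require Import List Relations Fin.
Import ListNotations.
Set Implicit Arguments.

(* Closed terms: built from B,C,I,K,W,cc,A by application and the
   constants /\_i xi_i for sequences of closed terms. *)
Inductive cterm : Type :=
| cB | cC | cI | cK | cW | ccc | cA
| capp : cterm -> cterm -> cterm
| cbig : (nat -> cterm) -> cterm.

(* The set Lambda of all terms, for a fixed N: additionally p, q_0..q_N. *)
Inductive term (N : nat) : Type :=
| tB | tC | tI | tK | tW | tcc | tA
| tp
| tq : Fin.t (S N) -> term N
| tapp : term N -> term N -> term N
| tbig : (nat -> cterm) -> term N.

Arguments tB {N}. Arguments tC {N}. Arguments tI {N}. Arguments tK {N}.
Arguments tW {N}. Arguments tcc {N}. Arguments tA {N}. Arguments tp {N}.
Arguments tq {N} _. Arguments tapp {N} _ _. Arguments tbig {N} _.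

Fixpoint emb {N : nat} (c : cterm) : term N :=
  match c with
  | cB => tB | cC => tC | cI => tI | cK => tK | cW => tW | ccc => tcc | cA => tA
  | capp a b => tapp (emb a) (emb b)
  | cbig f => tbig f
  end.

(* Stacks: finite sequences of terms; [] is pi_0. *)
Definition stack (N : nat) := list (term N).

Definition ell {N : nat} (t : term N) : term N :=
  tapp (tapp tC (tapp (tapp tB tC) tB)) t.

Fixpoint kont {N : nat} (pi : stack N) : term N :=
  match pi with
  | [] => tA
  | t :: pi' => tapp (ell t) (kont pi')
  end.

Definition sigma {N : nat} : term N :=
  tapp (tapp tB tW) (tapp tC (tapp (tapp tB tB) tB)).

Fixpoint numeral {N : nat} (n : nat) : term N :=
  match n with
  | 0 => tapp tK tI
  | S m => tapp sigma (numeral m)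
  end.

Definition process (N : nat) := (term N * stack N)%type.

Inductive step {N : nat} : process N -> process N -> Prop :=
| st_app : forall xi eta pi, step (tapp xi eta, pi) (xi, eta :: pi)
| st_B : forall xi eta zeta pi, step (tB, xi :: eta :: zeta :: pi) (xi, tapp eta zeta :: pi)
| st_C : forall xi eta zeta pi, step (tC, xi :: eta :: zeta :: pi) (xi, zeta :: eta :: pi)
| st_I : forall xi pi, step (tI, xi :: pi) (xi, pi)
| st_K : forall xi eta pi, step (tK, xi :: eta :: pi) (xi, pi)
| st_W : forall xi eta pi, step (tW, xi :: eta :: pi) (xi, eta :: eta :: pi)
| st_cc : forall xi pi, step (tcc, xi :: pi) (xi, kont pi :: pi)
| st_A : forall xi pi, step (tA, xi :: pi) (xi, [])
| st_big : forall g n pi, step (tbig g, numeral n :: pi) (emb (g n), pi).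

Definition exec {N : nat} : process N -> process N -> Prop :=
  clos_refl_trans (process N) step.

Definition pole {N : nat} (xi : term N) (pi : stack N) : Prop :=
  exists varpi, exec (xi, pi) (tp, varpi).

Inductive formula : Type :=
| FBot | FTop
| FImp : formula -> formula -> formula
| FAllN : (nat -> formula) -> formula.

Fixpoint falsity {N : nat} (F : formula) : stack N -> Prop :=
  match F with
  | FBot => fun _ => True
  | FTop => fun _ => False
  | FImp A B => fun pi => exists eta pi', pi = eta :: pi' /\
        (forall rho, falsity A rho -> pole eta rho) /\ falsity B pi'
  | FAllN G => fun pi => exists n pi', pi = numeral n :: pi' /\ falsity (G n) pi'
  end.

Definition realizes {N : nat} (xi : term N) (F : formula) : Prop :=
  forall pi, falsity F pi -> pole xi pi.

Definition FNeg (A : formula) : formula := FImp A FBot.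

(* The atomic formula f(n) <> 1 : falsity Pi if f n = 1, empty otherwise. *)
Definition neq1 (f : nat -> nat) (n : nat) : formula :=
  if Nat.eqb (f n) 1 then FBot else FTop.

(* exists n^N (f(n) = 1)  :=  not forall n^N not (f(n)=1), with
   not (f(n) = 1) being the formula f(n) <> 1. *)
Definition exists_f1 (f : nat -> nat) : formula :=
  FNeg (FAllN (fun n => neq1 f n)).

(* Main.v *)
Require Import Defs.
From Stdlib Require Import List Relations.
Import ListNotations.

Fixpoint sb {N : nat} (e : term N) (t : term N) : term N :=
  match t with
  | tp => e
  | tapp a b => tapp (sb e a) (sb e b)
  | _ => t
  end.

Fixpoint pfree {N : nat} (t : term N) : Prop :=
  match t with
  | tp => False
  | tapp a b => pfree a /\ pfree b
  | _ => True
  end.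

Lemma sb_emb {N} (e : term N) c : sb e (emb c) = emb c.
Proof. induction c; simpl; congruence. Qed.

Lemma sb_numeral {N} (e : term N) n : sb e (numeral n) = numeral n.
Proof. induction n; simpl; [reflexivity| rewrite IHn; reflexivity]. Qed.

Lemma pfree_numeral {N} n : pfree (@numeral N n).
Proof. induction n; simpl; unfold sigma; simpl; tauto. Qed.

Lemma sb_kont {N} (e : term N) pi : sb e (kont pi) = kont (map (sb e) pi).
Proof. induction pi; simpl; [reflexivity|]. rewrite IHpi; reflexivity. Qed.

Lemma sb_inv {N} (e : term N) : ~ pfree e -> forall x y, sb e x = y -> pfree y -> x = y.
Proof.
  intros He x; induction x; intros y Hy Hp; simpl in *; subst; auto.
  - contradiction.
  - destruct Hp as [H1 H2]. f_equal; auto.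
Qed.

Lemma back {N} (e : term N) : ~ pfree e -> forall t pi Y, t <> tp ->
  step (sb e t, map (sb e) pi) Y ->
  exists t' pi', step (t, pi) (t', pi') /\ Y = (sb e t', map (sb e) pi').
Proof.
  intros He t pi Y Ht Hs.
  destruct t; simpl in Hs; try congruence.
  - inversion Hs; subst.
    destruct pi as [|a [|b [|c pi]]]; simpl in *; try discriminate.
    injection H0; intros; subst. do 2 eexists; split; [constructor|reflexivity].
  - inversion Hs; subst.
    destruct pi as [|a [|b [|c pi]]]; simpl in *; try discriminate.
    injection H0; intros; subst. do 2 eexists; split; [constructor|reflexivity].
  - inversion Hs; subst.
    destruct pi as [|a pi]; simpl in *; try discriminate.
    injection H0; intros; subst. do 2 eexists; split; [constructor|reflexivity].
  - inversion Hs; subst.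
    destruct pi as [|a [|b pi]]; simpl in *; try discriminate.
    injection H0; intros; subst. do 2 eexists; split; [constructor|reflexivity].
  - inversion Hs; subst.
    destruct pi as [|a [|b pi]]; simpl in *; try discriminate.
    injection H0; intros; subst. do 2 eexists; split; [constructor|reflexivity].
  - inversion Hs; subst.
    destruct pi as [|a pi]; simpl in *; try discriminate.
    injection H0; intros; subst. do 2 eexists; split; [constructor|].
    simpl. rewrite sb_kont. reflexivity.
  - inversion Hs; subst.
    destruct pi as [|a pi]; simpl in *; try discriminate.
    injection H0; intros; subst. do 2 eexists; split; [constructor|reflexivity].
  - inversion Hs.
  - inversion Hs; subst. do 2 eexists; split; [constructor|reflexivity].
  - inversion Hs; subst.
    destruct pi as [|a pi]; simpl in *; try discriminate. match goal with H : _ = _ :: _ |- _ => injection H end; intros; subst.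
    idtac.
    symmetry in H0; apply sb_inv in H0; [|exact He|apply pfree_numeral]. subst.
    do 2 eexists; split; [constructor|]. rewrite sb_emb. reflexivity.
Qed.

Definition gsel (f : nat -> nat) (n : nat) : cterm :=
  if Nat.eqb (f n) 1 then cI else capp cA cI.

Definition eta {N} (f : nat -> nat) : term N :=
  tapp (tapp tC (tbig (gsel f))) tp.

Lemma eta_notpfree {N} f : ~ pfree (@eta N f).
Proof. simpl. tauto. Qed.

Ltac crush := match goal with H : clos_refl_trans_1n _ _ _ _ |- _ =>
  let Hs := fresh "Hs" in let Hr := fresh "Hr" in
  inversion H as [|? ? Hs Hr]; subst; clear H;
  [simpl in *; discriminate | inversion Hs; subst; clear Hs] end.

Lemma eta_analysis {N} f (sig : stack N) Q :
  clos_refl_trans_1n _ step (eta f, sig) Q -> fst Q = tp ->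
  exists n sig', sig = numeral n :: sig' /\ f n = 1.
Proof.
  unfold eta. intros H HQ.
  do 4 crush.
  match goal with |- exists _ _, _ :: ?p = _ /\ _ => exists n, p end.
  split; [reflexivity|].
  unfold gsel in *. destruct (Nat.eqb (f n) 1) eqn:E.
  - apply PeanoNat.Nat.eqb_eq; exact E.
  - simpl in *. repeat crush.
Qed.

Lemma main_sim {N} f : forall P Q, clos_refl_trans_1n _ step P Q ->
  forall (t : term N) pi, P = (sb (eta f) t, map (sb (eta f)) pi) -> fst Q = tp ->
  exists n varpi, f n = 1 /\ exec (t, pi) (tp, numeral n :: varpi).
Proof.
  intros P Q H. induction H as [P|P Y Q Hs Hr IH]; intros t pi HP HQ.
  - subst. simpl in HQ. destruct t; simpl in HQ; discriminate.
  - assert (Ht : t = tp \/ t <> tp) by (destruct t; try (left; reflexivity); right; discriminate).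
    destruct Ht as [Ht|Ht].
    + subst t. simpl in HP. subst P.
      destruct (eta_analysis f _ _ (@Relation_Operators.rt1n_trans _ step _ _ _ Hs Hr) HQ) as [n [sig' [Hsig Hf]]].
      destruct pi as [|a pi]; simpl in Hsig; [discriminate|].
      injection Hsig; intros _ Ha.
      apply sb_inv in Ha; [|apply eta_notpfree|apply pfree_numeral]. subst a.
      exists n, pi. split; [exact Hf|]. apply rt_refl.
    + subst P. destruct (back (eta f) (@eta_notpfree N f) t pi _ Ht Hs) as [t' [pi' [Hst HY]]].
      destruct (IH t' pi' HY HQ) as [n [varpi [Hf Hex]]].
      exists n, varpi. split; [exact Hf|].
      eapply rt_trans; [apply rt_step; exact Hst|exact Hex].
Qed.

Theorem proposition1 (N : nat) (f : nat -> nat) (theta : cterm) :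
  (forall n, f n = 0 \/ f n = 1) ->
  @realizes N (emb theta) (exists_f1 f) ->
  exists (n : nat) (varpi : stack N),
    f n = 1 /\ exec (emb theta, [tp]) (tp, numeral n :: varpi).
Proof.
  intros _ Hr.
  assert (Hp : pole (emb theta) [@eta N f]).
  { apply Hr. simpl. exists (eta f), []. split; [reflexivity|]. split; [|exact I].
    intros rho [n [pi' [Hrho Hfa]]]. subst rho.
    unfold neq1 in Hfa. destruct (Nat.eqb (f n) 1) eqn:E; [|contradiction].
    exists pi'. unfold eta.
    eapply rt_trans. apply rt_step. apply st_app.
    eapply rt_trans. apply rt_step. apply st_app.
    eapply rt_trans. apply rt_step. apply st_C.
    eapply rt_trans. apply rt_step. apply st_big.
    unfold gsel. rewrite E. simpl.
    apply rt_step. apply st_I. }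
  destruct Hp as [varpi Hex].
  apply clos_rt_rt1n in Hex.
  eapply (main_sim f _ _ Hex (emb theta) [tp]); [|reflexivity].
  simpl. rewrite sb_emb. reflexivity.
Qed.
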